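(* Let $r,s>0$ and let $\mathbf{P}$ be a poset in $C(\{r,s\})$, i.e. $\mathbf{P}$ has an interval representation in which every interval has length $r$ or $s$. Then $\dim(\mathbf{P})\le 5$.
   Context: An interval representation of a poset $(X,P)$ assigns to each $x\in X$ a closed real interval $[l_x,r_x]$ such that $x<y$ in $P$ iff $r_x<l_y$; the length of $[l_x,r_x]$ is $r_x-l_x$. The dimension $\dim(\mathbf{P})$ is the minimum number of linear extensions of $P$ whose intersection is $P$. *)

(* Defs.v *)
From mathcomp Require Import all_boot all_order all_algebra.
From mathcomp Require Import reals.
Set Implicit Arguments. Unset Strict Implicit. Unset Printing Implicit Defensive.
Import Order.TTheory GRing.Theory Num.Theory.
Local Open Scope ring_scope.

(* A finite poset is given by its strict order relation [P : rel T]. *)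

Definition interval_rep (R : realType) (T : finType) (P : rel T)
  (l r : T -> R) : Prop :=
  (forall x, l x <= r x) /\ (forall x y, P x y <-> r x < l y).

Definition in_C (R : realType) (S : pred R) (T : finType) (P : rel T) : Prop :=
  exists (l r : T -> R), interval_rep P l r /\ (forall x, r x - l x \in S).

Definition linear_extension (T : finType) (P L : rel T) : Prop :=
  irreflexive L /\ transitive L /\ (forall x y, x != y -> L x y || L y x)
  /\ (forall x y, P x y -> L x y).

Definition realizer (T : finType) (P : rel T) (k : nat) (L : 'I_k -> rel T) : Prop :=
  (forall i, linear_extension P (L i)) /\ (forall x y, P x y <-> forall i, L i x y).

Definition dim_le (T : finType) (P : rel T) (d : nat) : Prop :=
  exists k : nat, (k <= d)%N /\ exists L : 'I_k -> rel T, realizer P L.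

(* Main.v *)
Require Import Defs.
From mathcomp Require Import all_boot all_order all_algebra.
From mathcomp Require Import reals.
From mathcomp Require Import lra zify.
Import Order.TTheory GRing.Theory Num.Theory.
Local Open Scope ring_scope.

Definition sto {T : eqType} (L : rel T) :=
  [/\ irreflexive L, transitive L & forall x y, x != y -> L x y || L y x].

Fixpoint lexk (R : realType) (T : Type) (ks : seq (T -> R)) (tb : T -> nat)
  (x y : T) : bool :=
  match ks with
  | [::] => (tb x < tb y)%N
  | k :: ks' => (k x < k y) || ((k x == k y) && lexk R T ks' tb x y)
  end.
Arguments lexk {R T} ks tb x y.

Lemma lexk_sto (R : realType) (T : eqType) ks (tb : T -> nat) :
  injective tb -> sto (@lexk R T ks tb).
Proof.
move=> itb; split.
- move=> x; elim: ks => [|k ks IH] /=; first by rewrite ltnn.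
  by rewrite ltxx eqxx IH.
- move=> y x z; elim: ks => [|k ks IH] /=; first exact: ltn_trans.
  case/orP=> [h1|/andP[/eqP e1 h1]]; case/orP=> [h2|/andP[/eqP e2 h2]].
  + by rewrite (lt_trans h1 h2).
  + by rewrite -e2 h1.
  + by rewrite e1 h2.
  + by rewrite e1 e2 eqxx (IH h1 h2) orbT.
- move=> x y nxy; elim: ks => [|k ks IH] /=.
  + have : tb x != tb y by apply: contra nxy => /eqP /itb ->.
    by rewrite neq_ltn.
  + by case: (ltgtP (k x) (k y)).
Qed.

Lemma sto_asym (T : eqType) (L : rel T) x y : sto L -> L x y -> L y x -> False.
Proof. by case=> irr tr _ h1 h2; move: (tr _ _ _ h1 h2); rewrite irr. Qed.

Arguments sto_asym {T L x y}.

Definition rk {T : finType} (x : T) : nat := val (enum_rank x).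
Definition rrk {T : finType} (x : T) : nat := val (rev_ord (enum_rank x)).

Lemma rk_inj (T : finType) : injective (@rk T).
Proof. by move=> x y /val_inj /enum_rank_inj. Qed.
Lemma rrk_inj (T : finType) : injective (@rrk T).
Proof. by move=> x y /val_inj /rev_ord_inj /enum_rank_inj. Qed.

Lemma rev_lt n (i j : 'I_n) : (i < j)%N -> (rev_ord j < rev_ord i)%N.
Proof. move=> h /=; have := ltn_ord i; have := ltn_ord j; lia. Qed.

Lemma rk_rrk (T : finType) (x y : T) : (rk x < rk y)%N -> (rrk y < rrk x)%N.
Proof. exact: rev_lt. Qed.

Lemma linearize (R : realType) (T : finType) (C : rel T) :
  irreflexive C -> transitive C ->
  exists M, sto M /\ (forall x y, C x y -> M x y).
Proof.
move=> irrC trC.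
pose h x := #|[set z | C z x]|.
exists (lexk [:: fun x => (h x)%:R : R] (@rk T)); split.
  exact/lexk_sto/rk_inj.
move=> x y cxy /=; apply/orP; left; rewrite ltr_nat; apply: proper_card.
rewrite properE; apply/andP; split.
- by apply/subsetP => z; rewrite !inE => czx; exact: trC czx cxy.
- by apply/subsetPn; exists x; rewrite !inE ?cxy ?irrC.
Qed.

Definition fl {R : realType} (v : R) : R := (Num.floor v)%:~R.

Lemma flP {R : realType} (v : R) : fl v <= v /\ v < fl v + 1.
Proof. by split; [exact: floor_le | have := floorD1_gt v; rewrite intrD]. Qed.

Lemma fl_eq {R : realType} (v : R) (m : int) :
  m%:~R <= v -> v < m%:~R + 1 -> Num.floor v = m.
Proof. by move=> a b; apply: floor_def; rewrite intrD a b. Qed.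

Definition ksv {R : realType} {T : Type} (v : T -> R) : seq (T -> R) :=
  [:: fun x => fl (v x / 2); fun x => v x - fl (v x);
      fun x => - (v x - 2 * fl (v x / 2))].
Definition ks3 {R : realType} {T : Type} (u : T -> R) : seq (T -> R) :=
  [:: fun x => fl (u x); fun x => - u x].

Lemma ksv_ext (R : realType) (T : Type) (v : T -> R) tb x y :
  v x + 1 < v y -> lexk (ksv v) tb x y.
Proof.
move=> h /=.
have : Num.floor (v x / 2) <= Num.floor (v y / 2) by apply: le_floor; lra.
rewrite le_eqVlt => /orP[/eqP e|lt]; last by rewrite /fl ltr_int lt.
rewrite /fl e ltxx eqxx /=.
set A := Num.floor (v y / 2).
have [ax1 ax2] := flP (v x / 2); have [ay1 ay2] := flP (v y / 2).
rewrite /fl e -/A in ax1 ax2; rewrite /fl -/A in ay1 ay2.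
have Fx : Num.floor (v x) = A + A by apply: fl_eq; rewrite intrD; lra.
have Fy : Num.floor (v y) = A + A + 1 by apply: fl_eq; rewrite !intrD; lra.
rewrite Fx Fy !intrD; apply/orP; left; lra.
Qed.

Lemma ks3_ext (R : realType) (T : Type) (u : T -> R) tb x y :
  u x + 1 < u y -> lexk (ks3 u) tb x y.
Proof.
move=> h /=; apply/orP; left.
have [a1 a2] := flP (u x); have [b1 b2] := flP (u y); lra.
Qed.

Lemma ksv_pair (R : realType) (T : Type) (v : T -> R) tb (B : int) x y :
  B%:~R * 2 <= v x -> v x < B%:~R * 2 + 1 ->
  B%:~R * 2 + 1 <= v y -> v y < B%:~R * 2 + 2 ->
  v y <= v x + 1 -> v x < v y -> lexk (ksv v) tb y x.
Proof.
move=> h1 h2 h3 h4 h5 h6 /=.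
have Hx : Num.floor (v x / 2) = B by apply: fl_eq; lra.
have Hy : Num.floor (v y / 2) = B by apply: fl_eq; lra.
have Fx : Num.floor (v x) = B + B by apply: fl_eq; rewrite intrD; lra.
have Fy : Num.floor (v y) = B + B + 1 by apply: fl_eq; rewrite !intrD; lra.
rewrite /fl Hx Hy Fx Fy !intrD ltxx eqxx /=.
case: ltgtP => // [gt|eq] /=; first by exfalso; lra.
apply/orP; left; lra.
Qed.

Lemma semiorder3 (R : realType) (T : finType) (u : T -> R) :
  exists L1 L2 L3 : rel T,
  [/\ sto L1, sto L2, sto L3,
      (forall x y, u x + 1 < u y -> [&& L1 x y, L2 x y & L3 x y]) &
      (forall x y, x != y -> ~~ (u x + 1 < u y) -> [|| L1 y x, L2 y x | L3 y x])].
Proof.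
exists (lexk (ksv u) rk), (lexk (ksv (fun x => u x + 1)) rk), (lexk (ks3 u) rrk).
split; try exact/lexk_sto/rk_inj; first exact/lexk_sto/rrk_inj.
  move=> x y h; rewrite ksv_ext // ksv_ext ?ks3_ext //; lra.
move=> x y nxy; rewrite -leNgt => hle.
have [a1 a2] := flP (u x); have [b1 b2] := flP (u y).
case: (ltgtP (u x) (u y)) => [XY|YX|XeY].
- have [e|ne] := eqVneq (Num.floor (u x)) (Num.floor (u y)).
    apply/orP; right; apply/orP; right => /=.
    by rewrite /fl e ltxx eqxx /=; apply/orP; left; lra.
  have lt : Num.floor (u x) < Num.floor (u y).
    by rewrite lt_neqAle ne le_floor // ltW.
  set A := Num.floor (u x / 2).
  have [c1 c2] := flP (u x / 2); rewrite /fl -/A in c1 c2.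
  have fxA : A + A <= Num.floor (u x) by rewrite floor_ge_int intrD; lra.
  have [xlo|xhi] := ltP (u x) (A%:~R * 2 + 1).
    apply/orP; left; apply: (@ksv_pair _ _ _ _ A) => //; try lra.
    have : A + A + 1 <= Num.floor (u y) by lia.
    by rewrite floor_ge_int !intrD; lra.
  apply/orP; right; apply/orP; left.
  have fxA' : A + A + 1 <= Num.floor (u x) by rewrite floor_ge_int !intrD; lra.
  apply: (@ksv_pair _ _ _ _ (A + 1)); rewrite ?intrD; try lra.
  have : A + A + 1 + 1 <= Num.floor (u y) by lia.
  by rewrite floor_ge_int !intrD; lra.
- have [e|ne] := eqVneq (Num.floor (u y)) (Num.floor (u x)).
    apply/orP; left => /=.
    set A := Num.floor (u x / 2).
    have [c1 c2] := flP (u x / 2); rewrite /fl -/A in c1 c2.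
    have f1 : A + A <= Num.floor (u x) by rewrite floor_ge_int intrD; lra.
    have f2 : Num.floor (u x) < A + A + 1 + 1 by rewrite floor_lt_int !intrD; lra.
    have Hy : Num.floor (u y / 2) = A.
      apply: fl_eq.
        have : (A + A)%:~R <= (Num.floor (u y))%:~R :> R by rewrite ler_int e.
        rewrite intrD /fl in b1 *; lra.
      have : (Num.floor (u y))%:~R <= (A + A + 1)%:~R :> R.
        by rewrite ler_int e; lia.
      rewrite !intrD /fl in b2 *; lra.
    rewrite /fl Hy -/A ltxx eqxx /= e; apply/orP; left; lra.
  have lt : Num.floor (u y) < Num.floor (u x).
    by rewrite lt_neqAle ne le_floor // ltW.
  by apply/orP; right; apply/orP; right => /=; rewrite /fl ltr_int lt.
- have : rk x != rk y by apply: contra nxy => /eqP /rk_inj ->.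
  rewrite neq_ltn => /orP[h|h].
    by apply/orP; right; apply/orP; right => /=; rewrite XeY !ltxx !eqxx /= rk_rrk.
  by apply/orP; left => /=; rewrite XeY !ltxx !eqxx /= h.
Qed.

Lemma le_L_le (T : eqType) (L : rel T) x a b y :
  sto L -> (x == a) || L x a -> L a b -> (b == y) || L b y -> L x y.
Proof.
case=> _ tr _ /orP[/eqP->|h1] h2 /orP[/eqP<-|h3] //.
- exact: tr h2 h3.
- exact: tr h1 h2.
- exact: tr (tr _ _ _ h1 h2) h3.
Qed.

Arguments le_L_le {T L x a b y}.

Lemma le_le (T : eqType) (L : rel T) x y z :
  sto L -> (x == y) || L x y -> (y == z) || L y z -> (x == z) || L x z.
Proof.
case=> _ tr _ /orP[/eqP->|h1] // /orP[/eqP<-|h2]; first by rewrite h1 orbT.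
by rewrite (tr _ _ _ h1 h2) orbT.
Qed.

Arguments le_le {T L x y z}.

Lemma le_L_asym (T : eqType) (L : rel T) a b :
  sto L -> (a == b) || L a b -> L b a -> False.
Proof.
move=> sL /orP[/eqP->|h1] h2; first by case: sL => irr _ _; rewrite irr in h2.
exact: sto_asym sL h1 h2.
Qed.

Arguments le_L_asym {T L a b}.

Definition mergeC {T : finType} (P : rel T) (S : pred T) (LS LB : rel T) : rel T :=
  fun x y =>
  [|| [&& x \in S, y \in S & LS x y],
      [&& x \notin S, y \notin S & LB x y],
      [&& x \in S, y \notin S & [exists a, exists b,
          [&& a \in S, b \notin S, (x == a) || LS x a, P a b & (b == y) || LB b y]]]
    | [&& x \notin S, y \in S & [exists b, exists a,
          [&& b \notin S, a \in S, (x == b) || LB x b, P b a & (a == y) || LS a y]]]].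

Lemma merge (T : finType) (P : rel T) (S : pred T) (LS LB : rel T) :
  (forall a b c d, P a b -> P c d -> P a d || P c b) ->
  sto LS -> sto LB ->
  (forall x y, x \in S -> y \in S -> P x y -> LS x y) ->
  (forall x y, x \notin S -> y \notin S -> P x y -> LB x y) ->
  [/\ irreflexive (mergeC P S LS LB), transitive (mergeC P S LS LB),
     (forall x y, P x y -> mergeC P S LS LB x y),
     (forall x y, x \in S -> y \in S -> LS x y -> mergeC P S LS LB x y) &
     (forall x y, x \notin S -> y \notin S -> LB x y -> mergeC P S LS LB x y)].
Proof.
move=> P22 sS sB PS PB.
have [irS trS _] := sS; have [irB trB _] := sB.
split.
- move=> x; rewrite /mergeC irS irB.
  by case: (x \in S); rewrite /= ?andbF.
- move=> y x z; rewrite /mergeC.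
  case: (boolP (x \in S)) => xS; case: (boolP (y \in S)) => yS;
    case: (boolP (z \in S)) => zS; rewrite /= ?andbF ?orbF //=.
  + exact: trS.
  + move=> h1 /existsP[a /existsP[b /and5P[aS bS ya pab bz]]].
    apply/existsP; exists a; apply/existsP; exists b.
    rewrite aS bS pab bz /= (le_L_le sS (_ : (x == x) || _) h1 ya) ?orbT //.
    by rewrite eqxx.
  + move=> /existsP[a /existsP[b /and5P[aS bS xa pab b_y]]].
    move=> /existsP[b' /existsP[a' /and5P[b'S a'S yb' pb'a' a'z]]].
    case/orP: (P22 _ _ _ _ pab pb'a') => [paa'|pb'b].
      exact: (le_L_le sS xa (PS _ _ aS a'S paa') a'z).
    exfalso; exact: (le_L_asym sB (le_le sB b_y yb') (PB _ _ b'S bS pb'b)).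
  + move=> /existsP[a /existsP[b /and5P[aS bS xa pab b_y]]] h2.
    apply/existsP; exists a; apply/existsP; exists b.
    rewrite aS bS pab xa /=; apply/orP; right.
    by apply: (le_L_le sB b_y h2); rewrite eqxx.
  + move=> /existsP[b /existsP[a /and5P[bS aS xb pba a_y]]] h2.
    apply/existsP; exists b; apply/existsP; exists a.
    rewrite aS bS pba xb /=; apply/orP; right.
    by apply: (le_L_le sS a_y h2); rewrite eqxx.
  + move=> /existsP[b /existsP[a /and5P[bS aS xb pba a_y]]].
    move=> /existsP[a' /existsP[b' /and5P[a'S b'S ya' pa'b' b'z]]].
    case/orP: (P22 _ _ _ _ pba pa'b') => [pbb'|pa'a].
      exact: (le_L_le sB xb (PB _ _ bS b'S pbb') b'z).
    exfalso; exact: (le_L_asym sS (le_le sS a_y ya') (PS _ _ a'S aS pa'a)).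
  + move=> h1 /existsP[b /existsP[a /and5P[bS aS yb pba az]]].
    apply/existsP; exists b; apply/existsP; exists a.
    rewrite aS bS pba az /= (le_L_le sB (_ : (x == x) || _) h1 yb) ?orbT //.
    by rewrite eqxx.
  + exact: trB.
- move=> x y pxy; rewrite /mergeC.
  case: (boolP (x \in S)) => xS; case: (boolP (y \in S)) => yS;
    rewrite /= ?andbF ?orbF //=.
  + exact: PS.
  + apply/existsP; exists x; apply/existsP; exists y.
    by rewrite xS yS pxy !eqxx.
  + apply/existsP; exists x; apply/existsP; exists y.
    by rewrite xS yS pxy !eqxx.
  + exact: PB.
- by move=> x y xS yS h; rewrite /mergeC xS yS h.
- by move=> x y xS yS h; rewrite /mergeC xS yS h orbT.
Qed.

Lemma divlt (R : realType) (a b w : R) : 0 < w -> (a / w + 1 < b / w) = (a + w < b).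
Proof.
by move=> w0; rewrite -(ltr_pM2r w0) mulrDl !divfK ?gt_eqF // mul1r.
Qed.

Lemma sto_le (T : finType) (P L : rel T) :
  sto L -> (forall x y, P x y -> L x y) -> linear_extension P L.
Proof. by case=> ? ? ? ?; split. Qed.

Theorem proposition6p1 (R : realType) (r s : R) (T : finType) (P : rel T) :
  0 < r -> 0 < s ->
  in_C [pred t : R | (t == r) || (t == s)] P ->
  dim_le P 5.
Proof.
move=> r0 s0 [lo [hi [[lohi Piff] len]]].
pose S := [pred x | hi x - lo x == r].
have hiS x : x \in S -> hi x = lo x + r by rewrite inE => /eqP <-; rewrite addrC subrK.
have hiB x : x \notin S -> hi x = lo x + s.
  move: (len x); rewrite !inE => /orP[->//|/eqP <- _]; by rewrite addrC subrK.
have P22 : forall a b c d, P a b -> P c d -> P a d || P c b.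
  move=> a b c d /Piff h1 /Piff h2; apply/orP.
  case: (ltP (hi a) (lo d)) => h; [left; apply/Piff | right; apply/Piff]; lra.
have PSu x y : x \in S -> y \in S -> P x y = (lo x / r + 1 < lo y / r).
  move=> xS yS; rewrite divlt //; apply/idP/idP => [/Piff|h].
    by rewrite -hiS.
  by apply/Piff; rewrite hiS.
have PBu x y : x \notin S -> y \notin S -> P x y = (lo x / s + 1 < lo y / s).
  move=> xS yS; rewrite divlt //; apply/idP/idP => [/Piff|h].
    by rewrite -hiB.
  by apply/Piff; rewrite hiB.
have [LS1 [LS2 [LS3 [sS1 sS2 sS3 extS revS]]]] := @semiorder3 R T (fun x => lo x / r).
have [LB1 [LB2 [LB3 [sB1 sB2 sB3 extB revB]]]] := @semiorder3 R T (fun x => lo x / s).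
have PS1 x y : x \in S -> y \in S -> P x y -> LS1 x y.
  by move=> xS yS; rewrite PSu // => /extS /and3P[].
have PS2 x y : x \in S -> y \in S -> P x y -> LS2 x y.
  by move=> xS yS; rewrite PSu // => /extS /and3P[].
have PS3 x y : x \in S -> y \in S -> P x y -> LS3 x y.
  by move=> xS yS; rewrite PSu // => /extS /and3P[].
have PB1 x y : x \notin S -> y \notin S -> P x y -> LB1 x y.
  by move=> xS yS; rewrite PBu // => /extB /and3P[].
have PB2 x y : x \notin S -> y \notin S -> P x y -> LB2 x y.
  by move=> xS yS; rewrite PBu // => /extB /and3P[].
have PB3 x y : x \notin S -> y \notin S -> P x y -> LB3 x y.
  by move=> xS yS; rewrite PBu // => /extB /and3P[].
have [i1 t1 P1 S1 B1] := @merge T P S _ _ P22 sS1 sB1 PS1 PB1.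
have [i2 t2 P2 S2 B2] := @merge T P S _ _ P22 sS2 sB2 PS2 PB2.
have [i3 t3 P3 S3 B3] := @merge T P S _ _ P22 sS3 sB3 PS3 PB3.
have [M1 [m1 mC1]] := @linearize R T _ i1 t1.
have [M2 [m2 mC2]] := @linearize R T _ i2 t2.
have [M3 [m3 mC3]] := @linearize R T _ i3 t3.
pose p1 x := if x \in S then hi x else lo x.
pose q1 x := if x \in S then 1 else 0 : R.
pose p2 x := if x \in S then lo x else hi x.
pose q2 x := if x \in S then 0 else 1 : R.
pose E1 := lexk [:: p1; q1] (@rk T).
pose E2 := lexk [:: p2; q2] (@rk T).
have e1 : sto E1 by exact/lexk_sto/rk_inj.
have e2 : sto E2 by exact/lexk_sto/rk_inj.
have PE1 x y : P x y -> E1 x y.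
  move=> /Piff h; rewrite /E1 /= /p1; apply/orP; left.
  have := lohi x; have := lohi y.
  by case: (x \in S); case: (y \in S) => ? ?; lra.
have PE2 x y : P x y -> E2 x y.
  move=> /Piff h; rewrite /E2 /= /p2; apply/orP; left.
  have := lohi x; have := lohi y.
  by case: (x \in S); case: (y \in S) => ? ?; lra.
exists 5%N; split => //.
exists (fun i : 'I_5 => match val i with
                   | 0 => M1 | 1 => M2 | 2 => M3 | 3 => E1 | _ => E2 end).
split.
  case=> [[|[|[|[|n]]]] hn] /=; apply: sto_le => // x y pxy.
  - exact: mC1 (P1 _ _ pxy).
  - exact: mC2 (P2 _ _ pxy).
  - exact: mC3 (P3 _ _ pxy).
move=> x y; split.
  move=> pxy; case=> [[|[|[|[|n]]]] hn] /=.
  - exact: mC1 (P1 _ _ pxy).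
  - exact: mC2 (P2 _ _ pxy).
  - exact: mC3 (P3 _ _ pxy).
  - exact: PE1.
  - exact: PE2.
move=> H; apply/idPn => npxy.
have H1 : M1 x y := H (@Ordinal 5 0 isT).
have H2 : M2 x y := H (@Ordinal 5 1 isT).
have H3 : M3 x y := H (@Ordinal 5 2 isT).
have H4 : E1 x y := H (@Ordinal 5 3 isT).
have H5 : E2 x y := H (@Ordinal 5 4 isT).
have [exy|nxy] := eqVneq x y.
  by case: m1 => irr _ _; rewrite exy irr in H1.
case: (boolP (x \in S)) => xS; case: (boolP (y \in S)) => yS.
- rewrite PSu // in npxy.
  case/or3P: (revS _ _ nxy npxy) => h.
  + exact: sto_asym m1 H1 (mC1 _ _ (S1 _ _ yS xS h)).
  + exact: sto_asym m2 H2 (mC2 _ _ (S2 _ _ yS xS h)).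
  + exact: sto_asym m3 H3 (mC3 _ _ (S3 _ _ yS xS h)).
- apply: (sto_asym e1 H4).
  have : ~~ (hi x < lo y) by apply: contra npxy => h; apply/Piff.
  rewrite -leNgt /E1 /= /p1 /q1 (negbTE yS) xS => h.
  by case: ltgtP h => //= _ _; rewrite ltr01.
- apply: (sto_asym e2 H5).
  have : ~~ (hi x < lo y) by apply: contra npxy => h; apply/Piff.
  rewrite -leNgt /E2 /= /p2 /q2 (negbTE xS) yS => h.
  by case: ltgtP h => //= _ _; rewrite ltr01.
- rewrite PBu // in npxy.
  case/or3P: (revB _ _ nxy npxy) => h.
  + exact: sto_asym m1 H1 (mC1 _ _ (B1 _ _ yS xS h)).
  + exact: sto_asym m2 H2 (mC2 _ _ (B2 _ _ yS xS h)).
  + exact: sto_asym m3 H3 (mC3 _ _ (B3 _ _ yS xS h)).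
Qed.
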